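(* Let $H_A,H_B$ be finite-dimensional Hilbert spaces and let $\Phi:B(H_A)\to B(H_B)$ be a positive, trace-preserving linear map whose adjoint $\Phi^*:B(H_B)\to B(H_A)$ (with respect to the Hilbert–Schmidt inner product) satisfies the Schwarz-type inequality $$\Phi^{*}(\rho^{*})\,\Phi^{*}(\sigma)^{-1}\,\Phi^{*}(\rho)\le \Phi^{*}(\rho^{*}\sigma^{-1}\rho)$$ for every $\rho\in B(H_B)$ and every positive definite $\sigma\in B(H_B)$ (with $\Phi^*(\sigma)$ invertible). Let $X\in B(H_A)$ be positive definite with $\Phi(X)$ invertible, and let $\omega\in B(H_B)$ be positive definite. Define $$\tau=X^{1/2}\,\Phi^{*}\!\big(\Phi(X)^{-1/2}\,\omega\, \Phi(X)^{-1/2}\big)\,X^{1/2}\in B(H_A),$$ and assume $\tau$ is invertible. Define the linear map $V:B(H_B)\to B(H_A)$ by $V(\rho)=\Phi^{*}\big(\rho\,\Phi(X)^{-1/2}\big)X^{1/2}$. Then for every positive semidefinite $Y\in B(H_A)$, $$V^{*}\,\Delta(Y,\tau)\,V\le \Delta(\Phi(Y),\omega)$$ as operators on the Hilbert space $B(H_B)$ equipped with the inner product $\langle A,B\rangle=\operatorname{tr}(A^*B)$.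
   Context: For a positive semidefinite operator $\rho$ and a positive definite operator $\sigma$ on a finite-dimensional Hilbert space $H$, the relative modular operator $\Delta(\rho,\sigma)$ is the linear map on $B(H)$ given by $\Delta(\rho,\sigma)(Z)=\rho Z\sigma^{-1}$ (left multiplication by $\rho$ composed with right multiplication by $\sigma^{-1}$); it is a positive operator on $B(H)$ with the Hilbert–Schmidt inner product $\langle A,B\rangle=\operatorname{tr}(A^*B)$. $V^*$ denotes the adjoint of $V$ with respect to the Hilbert–Schmidt inner products. *)

(* Defs.v *)
From HB Require Import structures.
From mathcomp Require Import all_boot all_order all_algebra.
From mathcomp Require Import complex.
From mathcomp Require Import reals.
Set Implicit Arguments. Unset Strict Implicit. Unset Printing Implicit Defensive.
Import Order.TTheory GRing.Theory Num.Theory.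
Local Open Scope ring_scope.

(* Finite-dimensional Hilbert spaces are C^n with C = R[i], R : realType;
   B(H) is the type of square matrices 'M[C]_n. *)

Definition adjmx (C : numClosedFieldType) (m n : nat) (A : 'M[C]_(m, n)) : 'M[C]_(n, m) :=
  (map_mx Num.conj A)^T.

Definition hs (C : numClosedFieldType) (n : nat) (A B : 'M[C]_n) : C :=
  \tr (adjmx A *m B).

Definition psd (C : numClosedFieldType) (n : nat) (A : 'M[C]_n) : Prop :=
  forall v : 'cV[C]_n, 0 <= (adjmx v *m A *m v) 0 0.
Definition pd (C : numClosedFieldType) (n : nat) (A : 'M[C]_n) : Prop :=
  forall v : 'cV[C]_n, v != 0 -> 0 < (adjmx v *m A *m v) 0 0.

Definition mx_le (C : numClosedFieldType) (n : nat) (A B : 'M[C]_n) : Prop :=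
  psd (B - A).

Definition op_le (C : numClosedFieldType) (n : nat) (L M : 'M[C]_n -> 'M[C]_n) : Prop :=
  forall Z : 'M[C]_n, 0 <= hs Z (M Z - L Z).

Definition relmod (C : numClosedFieldType) (n : nat) (rho sigma : 'M[C]_n) : 'M[C]_n -> 'M[C]_n :=
  fun Z => rho *m Z *m invmx sigma.

Definition hs_adjoint (C : numClosedFieldType) (n m : nat)
  (F : 'M[C]_n -> 'M[C]_m) (G : 'M[C]_m -> 'M[C]_n) : Prop :=
  forall (A : 'M[C]_m) (B : 'M[C]_n), hs A (F B) = hs (G A) B.

Definition is_sqrtm (C : numClosedFieldType) (n : nat) (A S : 'M[C]_n) : Prop :=
  psd S /\ S *m S = A.

(* Main.v *)
Require Import Defs.
From HB Require Import structures.
From mathcomp Require Import all_boot all_order all_algebra.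
From mathcomp Require Import complex.
From mathcomp Require Import reals.
Import Order.TTheory GRing.Theory Num.Theory.
Local Open Scope ring_scope.

Section Gen.
Variable C : numClosedFieldType.

Lemma adjmxK m n (A : 'M[C]_(m,n)) : adjmx (adjmx A) = A.
Proof. by apply/matrixP=> i j; rewrite !mxE conjCK. Qed.

Lemma adjmxM m n p (A : 'M[C]_(m,n)) (B : 'M[C]_(n,p)) :
  adjmx (A *m B) = adjmx B *m adjmx A.
Proof. by rewrite /adjmx map_mxM trmx_mul. Qed.

Lemma adjmxD m n (A B : 'M[C]_(m,n)) : adjmx (A + B) = adjmx A + adjmx B.
Proof. by apply/matrixP=> i j; rewrite !mxE rmorphD. Qed.

Lemma adjmxN m n (A : 'M[C]_(m,n)) : adjmx (- A) = - adjmx A.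
Proof. by apply/matrixP=> i j; rewrite !mxE rmorphN. Qed.

Lemma adjmxB m n (A B : 'M[C]_(m,n)) : adjmx (A - B) = adjmx A - adjmx B.
Proof. by rewrite adjmxD adjmxN. Qed.

Lemma adjmx0 m n : adjmx (0 : 'M[C]_(m,n)) = 0.
Proof. by apply/matrixP=> i j; rewrite !mxE rmorph0. Qed.

Lemma adjmxZ m n a (A : 'M[C]_(m,n)) : adjmx (a *: A) = a^* *: adjmx A.
Proof. by apply/matrixP=> i j; rewrite !mxE rmorphM. Qed.

Lemma adjmx_inv n (A : 'M[C]_n) : adjmx (invmx A) = invmx (adjmx A).
Proof. by rewrite /adjmx map_invmx trmx_inv. Qed.

Lemma adjmx_sum n I r (P : pred I) (F : I -> 'M[C]_n) :
  adjmx (\sum_(i <- r | P i) F i) = \sum_(i <- r | P i) adjmx (F i).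
Proof. by apply: (big_morph _ (@adjmxD n n) (@adjmx0 n n)). Qed.

Lemma tr_adjmx n (A : 'M[C]_n) : \tr (adjmx A) = (\tr A)^*.
Proof. by rewrite /adjmx mxtrace_tr /mxtrace rmorph_sum; apply: eq_bigr=> i _; rewrite mxE. Qed.

Lemma hs_conj n (A B : 'M[C]_n) : hs A B = (hs B A)^*.
Proof. by rewrite /hs -tr_adjmx adjmxM adjmxK. Qed.

Lemma invmxM n (A B : 'M[C]_n) : A \in unitmx -> B \in unitmx ->
  invmx (A *m B) = invmx B *m invmx A.
Proof.
move=> uA uB; have uAB : A *m B \in unitmx by rewrite unitmx_mul uA.
have E : (A *m B) *m (invmx B *m invmx A) = 1%:M.
  by rewrite -mulmxA (mulmxA B) mulmxV // mul1mx mulmxV.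
by rewrite -[invmx (A *m B)]mulmx1 -E mulmxA mulVmx // mul1mx.
Qed.

Lemma polarL k (x y : 'M[C]_k) : adjmx (x + y) = x + y ->
  adjmx ('i *: (x - y)) = 'i *: (x - y) -> y = adjmx x.
Proof.
rewrite adjmxD adjmxZ adjmxB conjCi => H1 H2.
have H3 : adjmx x - adjmx y = y - x.
  have := congr1 (fun M => 'i *: M) H2.
  by rewrite !scalerA mulrN mulCii opprK scale1r scaleN1r opprB.
have : y *+ 2 = adjmx x *+ 2.
  rewrite -[y *+ 2](_ : (x + y) + (y - x) = _); last first.
    by rewrite addrC addrA subrK -mulr2n.
  by rewrite -H1 -H3 addrACA subrr addr0 mulr2n.
rewrite -!scaler_nat => /(scalerI _); apply.
by rewrite pnatr_eq0.
Qed.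


Lemma zmod4 (V : zmodType) (a b c d : V) : a + b + c + d - a - d = b + c.
Proof. by apply/eqP; rewrite !subr_eq; apply/eqP; rewrite [RHS]addrC !addrA. Qed.

Definition bq n (A : 'M[C]_n) (u w : 'cV[C]_n) : 'M[C]_1 := adjmx u *m A *m w.
Arguments bq {n}.

Lemma bqE n (A : 'M[C]_n) u w c :
  bq A (u + c *: w) (u + c *: w) =
  bq A u u + c *: bq A u w + c^* *: bq A w u + (c^* * c) *: bq A w w.
Proof.
rewrite /bq adjmxD adjmxZ !mulmxDl !mulmxDr -!scalemxAl -!scalemxAr scalerA.
by rewrite !addrA.
Qed.

Lemma herm1 (M : 'M[C]_1) : 0 <= M 0 0 -> adjmx M = M.
Proof. move=> H; apply/matrixP => i j; rewrite !ord1 !mxE. by rewrite conj_Creal // ger0_real. Qed.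

Lemma bq_herm n (A : 'M[C]_n) v : psd A -> adjmx (bq A v v) = bq A v v.
Proof. by move=> pA; apply: herm1; apply: pA. Qed.

Lemma adjmx_delta n (i : 'I_n) : adjmx (delta_mx i 0 : 'cV[C]_n) = delta_mx 0 i.
Proof. by apply/matrixP=> a b; rewrite !mxE rmorph_nat andbC. Qed.

Lemma bq_delta n (A : 'M[C]_n) i j : bq A (delta_mx i 0) (delta_mx j 0) 0 0 = A i j.
Proof. by rewrite /bq adjmx_delta -rowE -colE !mxE. Qed.

Lemma psd_herm n (A : 'M[C]_n) : psd A -> adjmx A = A.
Proof.
move=> pA; apply/matrixP => i j.
pose u : 'cV[C]_n := delta_mx i 0; pose w : 'cV[C]_n := delta_mx j 0.
have key : bq A w u = adjmx (bq A u w).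
  apply: polarL.
    have -> : bq A u w + bq A w u =
      bq A (u + 1 *: w) (u + 1 *: w) - bq A u u - bq A w w.
      by rewrite bqE rmorph1 mulr1 !scale1r zmod4.
    by rewrite !adjmxB !bq_herm.
  have -> : 'i *: (bq A u w - bq A w u) =
    bq A (u + 'i *: w) (u + 'i *: w) - bq A u u - bq A w w.
    by rewrite bqE conjCi mulNr mulCii opprK scale1r zmod4 scalerBr scaleNr.
  by rewrite !adjmxB !bq_herm.
have := congr1 (fun M : 'M[C]_1 => M 0 0) key; rewrite /= bq_delta.
have -> : adjmx (bq A u w) 0 0 = (A i j)^*.
  by rewrite [LHS]mxE [LHS]mxE /u /w bq_delta.
by move=> E; rewrite !mxE E conjCK.
Qed.


Lemma psd_rank1 n (u : 'cV[C]_n) : psd (u *m adjmx u).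
Proof.
move=> v; rewrite mulmxA -mulmxA.
have -> : adjmx u *m v = adjmx (adjmx v *m u) by rewrite adjmxM adjmxK.
by rewrite !mxE big_ord1 !mxE mul_conjC_ge0.
Qed.

Lemma rank1_exp n (u w : 'cV[C]_n) c :
  (u + c *: w) *m adjmx (u + c *: w) =
  u *m adjmx u + c *: (w *m adjmx u) + c^* *: (u *m adjmx w)
  + (c * c^*) *: (w *m adjmx w).
Proof.
rewrite adjmxD adjmxZ !mulmxDr !mulmxDl -!scalemxAl -!scalemxAr scalerA.
by rewrite !addrA.
Qed.

Section Lin.
Variables (n m : nat) (F : {linear 'M[C]_n -> 'M[C]_m}).
Hypothesis Fpos : forall A, psd A -> psd (F A).

Lemma Fh1 (u : 'cV[C]_n) : adjmx (F (u *m adjmx u)) = F (u *m adjmx u).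
Proof. exact/psd_herm/Fpos/psd_rank1. Qed.

Lemma lin_rank1 (u w : 'cV[C]_n) : F (w *m adjmx u) = adjmx (F (u *m adjmx w)).
Proof.
apply: polarL.
  have -> : F (u *m adjmx w) + F (w *m adjmx u) =
    F ((u + 1 *: w) *m adjmx (u + 1 *: w)) - F (u *m adjmx u) - F (w *m adjmx w).
    by rewrite rank1_exp rmorph1 mulr1 !scale1r !linearD zmod4 addrC.
  by rewrite !adjmxB !Fh1.
have -> : 'i *: (F (u *m adjmx w) - F (w *m adjmx u)) =
  F ((u + (- 'i) *: w) *m adjmx (u + (- 'i) *: w)) - F (u *m adjmx u)
    - F (w *m adjmx w).
  have ci : (- 'i)^* = 'i :> C by rewrite raddfN /= conjCi opprK.
  rewrite rank1_exp ci mulNr mulCii opprK scale1r.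
  by rewrite !linearD !linearZ /= zmod4 scalerN scaleNr addrC.
by rewrite !adjmxB !Fh1.
Qed.

End Lin.

Lemma decomp_col n (A : 'M[C]_n) :
  A = \sum_(j < n) col j A *m adjmx (delta_mx j 0 : 'cV[C]_n).
Proof.
apply/matrixP=> i k; rewrite summxE (bigD1 k) //= big1 => [|j jk].
  by rewrite adjmx_delta !mxE big_ord1 !mxE !eqxx /= mulr1 addr0.
rewrite adjmx_delta !mxE big_ord1 !mxE eqxx /=.
by rewrite eq_sym (negbTE jk) mulr0.
Qed.

Lemma lin_herm n m (F : {linear 'M[C]_n -> 'M[C]_m})
  (Fpos : forall A, psd A -> psd (F A)) A : F (adjmx A) = adjmx (F A).
Proof.
rewrite (@decomp_col _ A) adjmx_sum !linear_sum adjmx_sum; apply: eq_bigr => j _.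
by rewrite adjmxM adjmxK lin_rank1.
Qed.

Lemma hs_delta n (P : 'M[C]_n) i j :
  hs P ((delta_mx i 0 : 'cV[C]_n) *m delta_mx 0 j) = (P i j)^*.
Proof.
rewrite /hs mulmxA mxtrace_mulC mulmxA /mxtrace big_ord1 -rowE -colE !mxE.
by [].
Qed.

Lemma hs_inj n (P Q : 'M[C]_n) : (forall B, hs P B = hs Q B) -> P = Q.
Proof.
move=> H; apply/matrixP=> i j.
have := H ((delta_mx i 0 : 'cV[C]_n) *m delta_mx 0 j); rewrite !hs_delta.
by move/(congr1 Num.conj); rewrite !conjCK.
Qed.

Lemma adj_herm n m (F : 'M[C]_n -> 'M[C]_m) G
  (Fh : forall A, F (adjmx A) = adjmx (F A)) (Hadj : hs_adjoint F G) A :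
  G (adjmx A) = adjmx (G A).
Proof.
apply: hs_inj => B.
have -> : hs (G (adjmx A)) B = \tr (A *m F B) by rewrite -Hadj /hs adjmxK.
rewrite /hs adjmxK -[LHS]conjCK -tr_adjmx adjmxM mxtrace_mulC.
rewrite -Fh -[\tr (adjmx A *m _)]/(hs A (F (adjmx B))) Hadj /hs -adjmxM.
by rewrite tr_adjmx conjCK mxtrace_mulC.
Qed.

Lemma psd_diagQ n (M Q : 'M[C]_n) i : psd M -> 0 <= (adjmx Q *m M *m Q) i i.
Proof.
move=> pM; rewrite -(@bq_delta _ (adjmx Q *m M *m Q) i i) /bq adjmx_delta.
have -> : delta_mx 0 i *m (adjmx Q *m M *m Q) *m (delta_mx i 0 : 'cV[C]_n) =
  adjmx (Q *m (delta_mx i 0 : 'cV[C]_n)) *m M *m (Q *m (delta_mx i 0 : 'cV[C]_n)).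
  by rewrite adjmxM adjmx_delta !mulmxA.
exact: pM.
Qed.


Lemma tstarE n (M : 'M[C]_n) : map_mx Num.conj (M^T) = adjmx M.
Proof. by rewrite /adjmx map_trmx. Qed.

Lemma tr_psd n (Y D : 'M[C]_n) : psd Y -> psd D -> 0 <= \tr (Y *m D).
Proof.
move=> pY pD.
have hY := @psd_herm _ _ pY.
have nY : Y \is normalmx by apply/normalmxP; rewrite tstarE hY.
have /orthomx_spectralP EY := nY.
set P := spectralmx Y in EY; set d := spectral_diag Y in EY.
have uP : P \is unitarymx by apply: spectral_unitarymx.
have iP : invmx P = adjmx P by rewrite invmx_unitary // tstarE.
have PQ : P *m adjmx P = 1%:M by rewrite -tstarE; apply/unitarymxP.
have Ed : diag_mx d = adjmx (adjmx P) *m Y *m adjmx P.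
  by rewrite adjmxK EY iP !mulmxA PQ mul1mx -mulmxA PQ mulmx1.
rewrite EY iP -!mulmxA mxtrace_mulC -!mulmxA mul_diag_mx /mxtrace.
apply: sumr_ge0 => i _; rewrite mxE.
apply: mulr_ge0.
  have := @psd_diagQ _ _ (adjmx P) i pY; rewrite -Ed mxE eqxx mulr1n //.
have := @psd_diagQ _ _ (adjmx P) i pD; rewrite adjmxK !mulmxA //.
Qed.


Lemma pd_psd n (A : 'M[C]_n) : pd A -> psd A.
Proof.
move=> pA v; have [->|nz] := eqVneq v 0; last exact/ltW/pA.
by rewrite mulmx0 mxE.
Qed.

Lemma pd_unit n (A : 'M[C]_n) : pd A -> A \in unitmx.
Proof.
move=> pA; rewrite -row_free_unit -kermx_eq0.
case: (pickP (fun i => row i (kermx A) != 0)) => [i ri|all0]; last first.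
  by apply/eqP/row_matrixP => i; rewrite row0; have /negbFE/eqP := all0 i.
have uA0 : row i (kermx A) *m A = 0 by rewrite -row_mul mulmx_ker row0.
have nz : adjmx (row i (kermx A)) != 0.
  by apply: contra ri => /eqP H; rewrite -[row _ _]adjmxK H adjmx0.
have := pA _ nz; rewrite adjmxK uA0 mul0mx mxE ltxx //.
Qed.

End Gen.

Arguments psd_herm {C n A}.
Arguments pd_unit {C n A}.
Arguments tr_psd {C n Y D}.
Arguments lin_herm {C n m F}.

Local Open Scope complex_scope.

Theorem mainTheorem1 (R : realType) (nA nB : nat)
  (Phi : {linear 'M[R[i]]_nA -> 'M[R[i]]_nB})
  (Phis : 'M[R[i]]_nB -> 'M[R[i]]_nA)
  (Phi_pos : forall A : 'M[R[i]]_nA, psd A -> psd (Phi A))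
  (Phi_tp : forall A : 'M[R[i]]_nA, \tr (Phi A) = \tr A)
  (Phis_adj : hs_adjoint Phi Phis)
  (Schwarz : forall rho sigma : 'M[R[i]]_nB, pd sigma ->
      Phis sigma \in unitmx ->
      mx_le (Phis (adjmx rho) *m invmx (Phis sigma) *m Phis rho)
            (Phis (adjmx rho *m invmx sigma *m rho)))
  (X : 'M[R[i]]_nA) (X_pd : pd X) (PhiX_inv : Phi X \in unitmx)
  (omega : 'M[R[i]]_nB) (omega_pd : pd omega)
  (Xh : 'M[R[i]]_nA) (Xh_sqrt : is_sqrtm X Xh)
  (Th : 'M[R[i]]_nB) (Th_sqrt : is_sqrtm (Phi X) Th)
  (tau : 'M[R[i]]_nA)
  (tau_def : tau = Xh *m Phis (invmx Th *m omega *m invmx Th) *m Xh)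
  (tau_inv : tau \in unitmx)
  (V : 'M[R[i]]_nB -> 'M[R[i]]_nA)
  (V_def : forall rho, V rho = Phis (rho *m invmx Th) *m Xh)
  (Vs : 'M[R[i]]_nA -> 'M[R[i]]_nB) (Vs_adj : hs_adjoint V Vs)
  (Y : 'M[R[i]]_nA) (Y_psd : psd Y) :
  op_le (fun Z => Vs (relmod Y tau (V Z))) (relmod (Phi Y) omega).
Proof.
move=> Z; rewrite /relmod.
have Phih := lin_herm Phi_pos.
have Phish := @adj_herm _ _ _ Phi Phis Phih Phis_adj.
case: Xh_sqrt => Xh_psd XhX; case: Th_sqrt => Th_psd ThT.
have hXh := psd_herm Xh_psd; have hTh := psd_herm Th_psd.
have uXh : Xh \in unitmx.
  by have := pd_unit X_pd; rewrite -XhX unitmx_mul => /andP[].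
have uT : Th \in unitmx.
  by have := PhiX_inv; rewrite -ThT unitmx_mul => /andP[].
have uom := pd_unit omega_pd.
set iT := invmx Th.
have hiT : adjmx iT = iT by rewrite adjmx_inv hTh.
set sigma := iT *m omega *m iT.
have sigma_pd : pd sigma.
  move=> v nz.
  have -> : adjmx v *m sigma *m v = adjmx (iT *m v) *m omega *m (iT *m v).
    by rewrite adjmxM hiT !mulmxA.
  apply: omega_pd; apply: contra nz => /eqP H.
  by rewrite -(mulKVmx uT v) -/iT H mulmx0.
set S := Phis sigma.
have uS : S \in unitmx.
  by move: tau_inv; rewrite tau_def -/iT -/sigma -/S !unitmx_mul => /andP[/andP[]].
set rho := iT *m adjmx Z.
have Sch := Schwarz rho sigma sigma_pd uS.
have arho : adjmx rho = Z *m iT by rewrite adjmxM adjmxK hiT.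
have isig : invmx sigma = Th *m invmx omega *m Th.
  rewrite /sigma invmxM ?unitmx_mul ?unitmx_inv ?uT ?uom // invmxM ?unitmx_inv //.
  by rewrite /iT invmxK mulmxA.
set N := Z *m invmx omega *m adjmx Z.
have Erho : adjmx rho *m invmx sigma *m rho = N.
  rewrite arho isig /rho !mulmxA /iT mulmxKV // mulmxK //.
set K := Phis (Z *m iT).
rewrite Erho arho -/K in Sch.
have E0 : hs Z (Phi Y *m Z *m invmx omega - Vs (Y *m V Z *m invmx tau)) =
  hs Z (Phi Y *m Z *m invmx omega) - hs Z (Vs (Y *m V Z *m invmx tau)).
  by rewrite /hs mulmxBr linearB.
have E1 : hs Z (Phi Y *m Z *m invmx omega) = \tr (Y *m Phis N).
  have -> : hs Z (Phi Y *m Z *m invmx omega) = \tr (Phi Y *m N).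
    by rewrite /hs mxtrace_mulC /N -!mulmxA.
  rewrite mxtrace_mulC.
  transitivity (hs (adjmx N) (Phi Y)); first by rewrite /hs adjmxK.
  by rewrite Phis_adj /hs -Phish adjmxK mxtrace_mulC.
have E2 : hs Z (Vs (Y *m V Z *m invmx tau)) = hs (V Z) (Y *m V Z *m invmx tau).
  by rewrite hs_conj -Vs_adj -hs_conj.
have itau : invmx tau = invmx Xh *m invmx S *m invmx Xh.
  by rewrite tau_def -/iT -/sigma -/S invmxM ?unitmx_mul ?uXh ?uS // invmxM // mulmxA.
have E3 : hs (V Z) (Y *m V Z *m invmx tau) = \tr (Y *m (K *m invmx S *m Phis rho)).
  rewrite /hs mxtrace_mulC V_def -/iT -/K adjmxM hXh itau.
  rewrite -Phish adjmxM hiT -/rho !mulmxA mulmxK // mulmxKV //.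
rewrite E0 E1 E2 E3 -linearB /= -mulmxBr.
exact: tr_psd Y_psd Sch.
Qed.
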